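(* Let $(b,c)$ be a locally finite and connected graph over a countable set $X$ with a cocompact action of a group $G$ such that $H_{b,c}$ is $G$-invariant, and fix $x_0\in X$. Let $\mathcal{K}$ be the closure in $C(X)$ of $\{f\in\mathcal{H}^+:f(x_0)=1\}$ and $\mathcal{M}=\{f\in\mathcal{K}: f\text{ multiplicative}\}$. Then $\mathcal{M}=\mathrm{ex}\,\overline{\mathrm{conv}}\,\mathcal{M}$, the set of extreme points of the closed convex hull of $\mathcal{M}$.
   Context: A graph over $X$ is $(b,c)$ with $b:X\times X\to[0,\infty)$, $c:X\to\mathbb{R}$, $\sum_yb(x,y)<\infty$ ($b$ need not be symmetric); locally finite: each $x$ has finitely many $y$ with $b(x,y)>0$; connected: any two points are joined by a finite sequence $y_1,\dots,y_n$ with $b(y_i,y_{i+1})>0$. $C(X)$ carries the product topology. $H_{b,c}f(x)=\sum_yb(x,y)(f(x)-f(y))+c(x)f(x)$ on $\mathrm{Dom}(H)=\{f:\sum_yb(x,y)|f(y)|<\infty\ \forall x\}$; $\mathcal{H}^+$: nonnegative, nonzero $f$ with $Hf=0$. $T_gf(x)=f(g^{-1}x)$; cocompact: $GV=X$ for some finite $V$; $H$ is $G$-invariant if $T_g$ preserves $\mathrm{Dom}(H)$ and $HT_g=T_gH$. $f$ is multiplicative if $T_gf=\gamma(g^{-1})f$ for all $g\in G$ for some homomorphism $\gamma:G\to(0,\infty)$. *)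

(* Defs.v *)
From HB Require Import structures.
From mathcomp Require Import all_boot all_order all_algebra.
From mathcomp Require Import all_classical all_reals all_analysis.
Set Implicit Arguments. Unset Strict Implicit. Unset Printing Implicit Defensive.
Import Order.TTheory GRing.Theory Num.Theory.
Import numFieldNormedType.Exports.
Local Open Scope classical_set_scope.
Local Open Scope ring_scope.

Definition locally_finite {R : realType} {X : Type} (b : X -> X -> R) : Prop :=
  forall x, finite_set [set y | 0 < b x y].

Definition connected_graph {R : realType} {X : Type} (b : X -> X -> R) : Prop :=
  forall x y : X, exists s : seq X,
    path (fun u v => 0 < b u v) x s /\ last x s = y.

(* H_{b,c} f (x) = sum_y b(x,y)(f(x)-f(y)) + c(x) f(x); for a locally finite
   graph the sum is over the finite set of y with b(x,y) > 0 (other terms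
   vanish since b >= 0). *)
Definition Hop {R : realType} {X : choiceType} (b : X -> X -> R) (c : X -> R)
  (f : X -> R) : X -> R :=
  fun x => (\sum_(y \in [set y | 0 < b x y]) (b x y * (f x - f y))) + c x * f x.

Definition DomH {R : realType} {X : choiceType} (b : X -> X -> R) (f : X -> R) : Prop :=
  forall x, (\esum_(y in [set: X]) (b x y * `|f y|)%:E < +oo)%E.

Definition Hplus {R : realType} {X : choiceType} (b : X -> X -> R) (c : X -> R) :
  set (X -> R) :=
  [set f | (forall x, 0 <= f x) /\ (exists x, f x != 0) /\ DomH b f /\
           (forall x, Hop b c f x = 0)].

Definition is_action (G : groupType) (X : Type) (act : G -> X -> X) : Prop :=
  (forall x, act 1%g x = x) /\ (forall g h x, act (g * h)%g x = act g (act h x)).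

Definition Tg (G : groupType) (X : Type) {R : Type} (act : G -> X -> X) (g : G)
  (f : X -> R) : X -> R := fun x => f (act (g^-1)%g x).

Definition cocompact (G : groupType) (X : Type) (act : G -> X -> X) : Prop :=
  exists V : set X, finite_set V /\ forall x, exists g v, V v /\ x = act g v.

Definition G_invariant {R : realType} (G : groupType) (X : choiceType)
  (act : G -> X -> X) (b : X -> X -> R) (c : X -> R) : Prop :=
  forall g : G, (forall f, DomH b f -> DomH b (Tg act g f)) /\
    (forall f, DomH b f -> Hop b c (Tg act g f) = Tg act g (Hop b c f)).

Definition pos_hom {R : realType} (G : groupType) (gam : G -> R) : Prop :=
  (forall g, 0 < gam g) /\ (forall g h, gam (g * h)%g = gam g * gam h).

Definition multiplicative_fn {R : realType} (G : groupType) (X : Type)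
  (act : G -> X -> X) (f : X -> R) : Prop :=
  exists gam : G -> R, pos_hom gam /\
    forall g : G, Tg act g f = (fun x => gam (g^-1)%g * f x).

(* convex hull in C(X) = R^X: finite convex combinations (pointwise) *)
Definition conv_hull {R : realType} {X : Type} (A : set (X -> R)) : set (X -> R) :=
  [set f | exists (n : nat) (t : 'I_n -> R) (g : 'I_n -> X -> R),
     (forall i, 0 <= t i) /\ \sum_(i < n) t i = 1 /\ (forall i, A (g i)) /\
     (forall x, f x = \sum_(i < n) t i * g i x)].

Definition ptws_closure {R : realType} {X : Type} (A : set (X -> R)) : set (X -> R) :=
  closure (A : set {ptws X -> R}).

Definition extreme_points {R : realType} {X : Type} (C : set (X -> R)) : set (X -> R) :=
  [set p | C p /\ forall u v (t : R), C u -> C v -> 0 < t < 1 ->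
     p = (fun x => t * u x + (1 - t) * v x) -> u = p /\ v = p].

(* Main.v *)
Require Import Defs.
From HB Require Import structures.
From mathcomp Require Import all_boot all_order all_algebra.
From mathcomp Require Import all_classical all_reals all_analysis.
From mathcomp Require Import finmap.
From mathcomp Require Import ring lra.
Import Order.TTheory GRing.Theory Num.Theory.
Import numFieldNormedType.Exports.
Local Open Scope classical_set_scope.
Local Open Scope ring_scope.
Set Implicit Arguments. Unset Strict Implicit.

Lemma le_sum_seq (R : realType) (T : eqType) (r : seq T) (F : T -> R) z :
  (forall i, 0 <= F i) -> z \in r -> F z <= \sum_(i <- r) F i.
Proof.
move=> F0; elim: r => [//|i r IH]; rewrite inE big_cons => /orP[/eqP->|zr].
  by rewrite lerDl sumr_ge0.
by rewrite (le_trans (IH zr)) // lerDr.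
Qed.

Lemma Hop_seq (R : realType) (X : choiceType) (b : X -> X -> R) c f x :
  locally_finite b ->
  Hop b c f x = \sum_(y <- fset_set [set y | 0 < b x y]) (b x y * (f x - f y))
     + c x * f x.
Proof. by move=> lf; rewrite /Hop fsbig_finite //. Qed.

Lemma Hop_lin (R : realType) (X : choiceType) (b : X -> X -> R) c f g a d x :
  locally_finite b ->
  Hop b c (fun y => a * f y + d * g y) x = a * Hop b c f x + d * Hop b c g x.
Proof.
move=> lf; rewrite !Hop_seq // !mulrDr !mulr_sumr.
set s := fset_set _.
have -> : \sum_(i <- s) b x i * (a * f x + d * g x - (a * f i + d * g i)) =
  \sum_(i <- s) (a * (b x i * (f x - f i)) + d * (b x i * (g x - g i))).
  by apply: eq_bigr => i _; ring.
rewrite big_split /= -!mulr_sumr; ring.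
Qed.

Lemma Hop_sum (R : realType) (X : choiceType) (b : X -> X -> R) c n
  (t : 'I_n -> R) (g : 'I_n -> X -> R) x :
  locally_finite b ->
  Hop b c (fun y => \sum_(i < n) t i * g i y) x = \sum_(i < n) t i * Hop b c (g i) x.
Proof.
move=> lf; rewrite !Hop_seq //.
under [in RHS]eq_bigr do rewrite Hop_seq // mulrDr mulr_sumr.
rewrite big_split /= exchange_big /=; congr (_ + _).
  apply: eq_bigr => y _; rewrite -sumrB mulr_sumr; apply: eq_bigr => i _; ring.
by rewrite mulr_sumr; apply: eq_bigr => i _; ring.
Qed.

Lemma zero_step (R : realType) (X : choiceType) (b : X -> X -> R) c w x z :
  (forall x y, 0 <= b x y) -> locally_finite b -> (forall x, 0 <= w x) ->
  Hop b c w x = 0 -> w x = 0 -> 0 < b x z -> w z = 0.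
Proof.
move=> b0 lf w0; rewrite Hop_seq // => H wx bz.
have E : \sum_(y <- fset_set [set y | 0 < b x y]) b x y * w y = 0.
  move: H; rewrite wx mulr0 addr0.
  under eq_bigr do rewrite sub0r mulrN.
  by rewrite sumrN => /eqP; rewrite oppr_eq0 => /eqP.
have : b x z * w z <= 0.
  rewrite -E; apply: (@le_sum_seq R X _ (fun y => b x y * w y) z).
    by move=> i; rewrite mulr_ge0.
  by rewrite in_fset_set //; apply/mem_set.
rewrite (pmulr_rle0 _ bz) => le0; apply/eqP.
by rewrite eq_le le0 w0.
Qed.

Definition Sp (R : realType) (X : choiceType) (b : X -> X -> R) (c : X -> R) (x0 : X)
  : set (X -> R) :=
  [set h | (forall x, 0 <= h x) /\ (forall x, Hop b c h x = 0) /\ h x0 = 1].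

Lemma zero_path (R : realType) (X : choiceType) (b : X -> X -> R) c w :
  (forall x y, 0 <= b x y) -> locally_finite b -> (forall x, 0 <= w x) ->
  (forall x, Hop b c w x = 0) ->
  forall s x, path (fun u v => 0 < b u v) x s -> w x = 0 -> w (last x s) = 0.
Proof.
move=> b0 lf w0 hw; elim=> [//|z s IH] x /= /andP[bxz ps] wx.
exact: (IH z ps (zero_step b0 lf w0 (hw x) wx bxz)).
Qed.

Lemma zero_all (R : realType) (X : choiceType) (b : X -> X -> R) c w y :
  (forall x y, 0 <= b x y) -> locally_finite b -> connected_graph b ->
  (forall x, 0 <= w x) -> (forall x, Hop b c w x = 0) -> w y = 0 ->
  forall z, w z = 0.
Proof.
move=> b0 lf cg w0 hw wy z; have [s [ps <-]] := cg y z.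
exact: (zero_path b0 lf w0 hw ps).
Qed.

Lemma pos_Sp (R : realType) (X : choiceType) (b : X -> X -> R) c x0 h :
  (forall x y, 0 <= b x y) -> locally_finite b -> connected_graph b ->
  Sp b c x0 h -> forall y, 0 < h y.
Proof.
move=> b0 lf cg [h0 [hh hx0]] y; rewrite lt_def h0 andbT; apply/negP => /eqP hy.
have := zero_all b0 lf cg h0 hh hy x0; rewrite hx0 => /eqP; by rewrite oner_eq0.
Qed.

Lemma step_bound (R : realType) (X : choiceType) (b : X -> X -> R) c h x z :
  (forall x y, 0 <= b x y) -> locally_finite b -> (forall x, 0 <= h x) ->
  Hop b c h x = 0 -> 0 < b x z ->
  h z <= (`|\sum_(y <- fset_set [set y | 0 < b x y]) b x y + c x| / b x z) * h x.
Proof.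
move=> b0 lf h0; rewrite Hop_seq // => H bz.
set s := fset_set _ in H *.
have E : \sum_(y <- s) b x y * h y = (\sum_(y <- s) b x y + c x) * h x.
  move: H; under eq_bigr do rewrite mulrBr.
  rewrite sumrB -mulr_suml => /eqP; rewrite mulrDl.
  by rewrite addrAC subr_eq0 => /eqP <-.
have L1 : b x z * h z <= \sum_(y <- s) b x y * h y.
  apply: (@le_sum_seq R X _ (fun y => b x y * h y) z).
    by move=> i; rewrite mulr_ge0.
  by rewrite in_fset_set //; apply/mem_set.
have L2 : (\sum_(y <- s) b x y + c x) * h x <= `|\sum_(y <- s) b x y + c x| * h x.
  by rewrite ler_wpM2r // real_ler_norm // num_real.
rewrite mulrAC ler_pdivlMr // mulrC.
by apply: le_trans L1 _; rewrite E.
Qed.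

Lemma harnack (R : realType) (X : choiceType) (b : X -> X -> R) c :
  (forall x y, 0 <= b x y) -> locally_finite b ->
  forall s x, path (fun u v => 0 < b u v) x s ->
  exists C, 0 <= C /\ forall h, (forall x, 0 <= h x) -> (forall x, Hop b c h x = 0) ->
    h (last x s) <= C * h x.
Proof.
move=> b0 lf; elim=> [|z s IH] x /=.
  by move=> _; exists 1; split => // h _ _; rewrite mul1r.
move=> /andP[bxz ps]; have [C [C0 HC]] := IH z ps.
set k := (`|\sum_(y <- fset_set [set y | 0 < b x y]) b x y + c x| / b x z).
have k0 : 0 <= k by rewrite divr_ge0 // ltW.
exists (C * k); split; first by rewrite mulr_ge0.
move=> h h0 hh; apply: (le_trans (HC h h0 hh)).
rewrite -mulrA ler_wpM2l //.
exact: (step_bound b0 lf h0 (hh x) bxz).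
Qed.

Lemma max_seq (R : realType) (T : eqType) (phi : T -> R) (s : seq T) v0 :
  v0 \in s -> exists2 m, m \in s & forall v, v \in s -> phi v <= phi m.
Proof.
elim: s v0 => [//|a s IH] v0 _.
case: s IH => [|a' s] IH.
  by exists a; rewrite ?inE // => v; rewrite inE => /eqP->.
have [m ms Hm] := IH a' (mem_head _ _).
have [le|le] := leP (phi a) (phi m).
  exists m; first by rewrite inE ms orbT.
  by move=> v; rewrite inE => /orP[/eqP->//|]; exact: Hm.
exists a; first exact: mem_head.
move=> v; rewrite inE => /orP[/eqP->//|/Hm vm].
exact: (le_trans vm (ltW le)).
Qed.

Lemma cs_ineq (R : realType) n (w gam : 'I_n -> R) : (forall i, 0 <= w i) ->
  (\sum_(i < n) w i * gam i) ^+ 2 <= (\sum_(i < n) w i * gam i ^+ 2) * \sum_(i < n) w i.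
Proof.
move=> w0; set A := \sum_(i < n) w i * gam i; set B := \sum_(i < n) _ * _ ^+ 2.
set W := \sum_(i < n) w i.
have W0 : 0 <= W by rewrite sumr_ge0.
have E : forall l, \sum_(i < n) w i * (gam i - l) ^+ 2 = B - 2 * l * A + l ^+ 2 * W.
  move=> l; rewrite /B /A /W.
  have -> : \sum_(i < n) w i * (gam i - l) ^+ 2 =
    \sum_(i < n) (w i * gam i ^+ 2 + (- (2 * l)) * (w i * gam i) + l ^+ 2 * w i).
    by apply: eq_bigr => i _; ring.
  rewrite !big_split /= -!mulr_sumr; ring.
have S0 : forall l, 0 <= B - 2 * l * A + l ^+ 2 * W.
  by move=> l; rewrite -E sumr_ge0 // => i _; rewrite mulr_ge0 // sqr_ge0.
have [Wz|Wp] := eqVneq W 0.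
  have wz : forall i, w i = 0.
    move=> i; move/eqP: Wz; rewrite psumr_eq0 //.
    by move=> /allP /(_ i (mem_index_enum _)) /implyP /(_ isT) /eqP.
  rewrite Wz mulr0 /A big1 => [|i _]; first by rewrite expr2 mul0r.
  by rewrite wz mul0r.
have Wgt : 0 < W by rewrite lt_def Wp W0.
have := S0 (A / W) => H.
have : 0 <= W * (B - 2 * (A / W) * A + (A / W) ^+ 2 * W) by rewrite mulr_ge0.
have -> : W * (B - 2 * (A / W) * A + (A / W) ^+ 2 * W) = B * W - A ^+ 2.
  by field.
by rewrite subr_ge0.
Qed.

Lemma ratio_eq (R : realType) (t a b p q P Q g : R) : 0 < t < 1 -> 0 < a -> 0 < b ->
  p ^+ 2 <= P * a -> q ^+ 2 <= Q * b ->
  t * p + (1 - t) * q = g * (t * a + (1 - t) * b) ->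
  t * P + (1 - t) * Q = g ^+ 2 * (t * a + (1 - t) * b) -> p = g * a.
Proof.
move=> /andP[t0 t1] a0 b0 hp hq e1 e2.
set s := 1 - t in e1 e2 *; have s0 : 0 < s by rewrite subr_gt0.
set F := t * a + s * b in e1 e2 *.
have F0 : 0 < F by rewrite addr_gt0 // mulr_gt0.
have I1 : t * b * p ^+ 2 <= t * b * (P * a) by rewrite ler_wpM2l // mulr_ge0 // ltW.
have I2 : s * a * q ^+ 2 <= s * a * (Q * b) by rewrite ler_wpM2l // mulr_ge0 // ltW.
have I3 : (t * b * p ^+ 2 + s * a * q ^+ 2) * F <= a * b * (t * P + s * Q) * F.
  apply: ler_wpM2r; first exact: ltW.
  have -> : a * b * (t * P + s * Q) = t * b * (P * a) + s * a * (Q * b) by ring.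
  exact: lerD.
have Id : (t * b * p ^+ 2 + s * a * q ^+ 2) * F - a * b * (t * p + s * q) ^+ 2
   = t * s * (p * b - q * a) ^+ 2 by rewrite /F; ring.
have Z : a * b * (t * P + s * Q) * F - a * b * (t * p + s * q) ^+ 2 = 0.
  rewrite e1 e2; ring.
have : t * s * (p * b - q * a) ^+ 2 <= 0.
  by rewrite -Id -Z lerB.
rewrite pmulr_rle0 ?mulr_gt0 // => sq0.
have : (p * b - q * a) ^+ 2 = 0 by apply/eqP; rewrite eq_le sq0 sqr_ge0.
move/eqP; rewrite sqrf_eq0 subr_eq0 => /eqP pq.
have : p * F = g * a * F.
  have -> : p * F = a * (t * p + s * q) by rewrite /F; nra.
  by rewrite e1; ring.
by move/(mulIf (lt0r_neq0 F0)).
Qed.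
Lemma ev_cvg (R : realType) (X : countType) (p : {ptws X -> R}) (t : X) :
  (fun h : {ptws X -> R} => h t) @ nbhs p --> p t.
Proof. exact: (@proj_continuous X (fun _ => R) t p). Qed.

Lemma closure_img (T U : topologicalType) (F : T -> U) (A : set T) (B : set U) p :
  closure A p -> F @ nbhs p --> F p -> (forall a, A a -> B (F a)) -> closure B (F p).
Proof.
move=> cA Fc AB N /Fc NF.
have [a [Aa Na]] := cA _ NF.
by exists (F a); split => //; apply: AB.
Qed.

Lemma closed_transfer (T : topologicalType) (R : realType) (F : T -> R) (A : set T)
   (C : set R) p :
  closed C -> closure A p -> F @ nbhs p --> F p -> (forall a, A a -> C (F a)) -> C (F p).
Proof.
move=> cC cA Fc AC; have := closure_img cA Fc AC.
by rewrite -(closure_id C).1.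
Qed.

Lemma Hop_cvg (R : realType) (X : countType) (b : X -> X -> R) c x (p : {ptws X -> R}) :
  locally_finite b ->
  (fun h : {ptws X -> R} => Hop b c h x) @ nbhs p --> Hop b c p x.
Proof.
move=> lf.
have E : (fun h : {ptws X -> R} => Hop b c h x) = (fun h : {ptws X -> R} =>
  \sum_(y <- fset_set [set y | 0 < b x y]) (b x y * (h x - h y)) + c x * h x).
  by apply: funext => h; rewrite Hop_seq.
rewrite E Hop_seq //; apply: cvgD.
  apply: cvg_big; first exact: add_continuous.
  move=> y _; apply: cvgM; first exact: cvg_cst.
  by apply: cvgB; exact: ev_cvg.
by apply: cvgM; [exact: cvg_cst | exact: ev_cvg].
Qed.

Lemma Sp_closed (R : realType) (X : countType) (b : X -> X -> R) c x0
  (A : set {ptws X -> R}) (p : {ptws X -> R}) :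
  locally_finite b -> A `<=` Sp b c x0 -> closure A p -> Sp b c x0 p.
Proof.
move=> lf AS cA; split; [|split].
- move=> x; apply: (closed_transfer (F := fun h : {ptws X -> R} => h x)
     (C := [set r | 0 <= r])) cA _ _; first exact: closed_ge.
    exact: ev_cvg.
  by move=> a /AS [h0 _]; exact: h0.
- move=> x; apply: (closed_transfer (F := fun h : {ptws X -> R} => Hop b c h x)
     (C := [set r | r = 0])) cA _ _; first exact: closed_eq.
    exact: Hop_cvg.
  by move=> a /AS [_ [hh _]]; exact: hh.
- apply: (closed_transfer (F := fun h : {ptws X -> R} => h x0)
     (C := [set r | r = 1])) cA _ _; first exact: closed_eq.
    exact: ev_cvg.
  by move=> a /AS [_ [_ h1]]; exact: h1.
Qed.

Lemma DomH_lf (R : realType) (X : countType) (b : X -> X -> R) :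
  (forall x y, 0 <= b x y) -> locally_finite b -> forall f, DomH b f.
Proof.
move=> b0 lf f x.
have -> : (\esum_(y in [set: X]) (b x y * `|f y|)%:E =
           \esum_(y in [set y | (0 < b x y)%R]) (b x y * `|f y|)%:E)%E.
  rewrite [RHS]esum_mkcond; apply: eq_esum => y _.
  case: ifPn => // /negP yN.
  have : b x y = 0 :> R.
    apply/eqP; rewrite eq_le b0 andbT leNgt; apply/negP => byp.
    by apply: yN; apply/mem_set.
  by move=> ->; rewrite mul0r.
rewrite esum_fset //; last by move=> i _; rewrite lee_fin mulr_ge0.
by rewrite fsumEFin // ltry.
Qed.

Lemma K_eq (R : realType) (X : countType) (b : X -> X -> R) c x0 :
  (forall x y, 0 <= b x y) -> locally_finite b ->
  ptws_closure [set f | Hplus b c f /\ f x0 = 1] = Sp b c x0.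
Proof.
move=> b0 lf; apply/seteqP; split.
  move=> p cp; apply: (Sp_closed lf _ cp) => f [[h0 [_ [_ hh]]] f1].
  by split.
move=> p [h0 [hh h1]]; rewrite /ptws_closure; apply: subset_closure.
split => //; split => //; split; first by exists x0; rewrite h1 oner_eq0.
by split => //; exact: DomH_lf.
Qed.
Lemma ptws_cvgP (R : realType) (X : countType) (F : set_system {ptws X -> R})
  (f : {ptws X -> R}) : Filter F ->
  (forall t, (fun g : {ptws X -> R} => g t) @ F --> f t) -> F --> f.
Proof.
move=> FF H.
apply/cvg_sup => i U.
have /= -> := @nbhsE (initial_topology (fun g : X -> R => g i)) f.
case=> B [[C oC <- Cf]] /filterS; apply.
apply: (H i); rewrite nbhsE; exists C => //.
Qed.

Definition mult1 (R : realType) (G : groupType) (X : Type) (act : G -> X -> X) (x0 : X)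
  (m : X -> R) := forall g y, m (act g y) = m (act g x0) * m y.

Lemma conv_Sp (R : realType) (X : countType) (b : X -> X -> R) c x0 (M : set (X -> R)) :
  locally_finite b -> M `<=` Sp b c x0 -> conv_hull M `<=` Sp b c x0.
Proof.
move=> lf HM f [n [t [g [t0 [t1 [Mg fe]]]]]].
have -> : f = (fun x => \sum_(i < n) t i * g i x) by apply: funext.
split; [|split].
- move=> x; apply: sumr_ge0 => i _; rewrite mulr_ge0 //.
  by have [h0 _] := HM _ (Mg i); exact: h0.
- move=> x; rewrite Hop_sum // big1 // => i _.
  by have [_ [hh _]] := HM _ (Mg i); rewrite hh mulr0.
- rewrite -t1; apply: eq_bigr => i _.
  by have [_ [_ h1]] := HM _ (Mg i); rewrite h1 mulr1.
Qed.

Lemma conv_ineq (R : realType) (X : countType) (b : X -> X -> R) c x0 (M : set (X -> R))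
  (G : groupType) (act : G -> X -> X) :
  (forall m, M m -> Sp b c x0 m /\ mult1 act x0 m) ->
  forall h, conv_hull M h -> forall g x,
    h (act g x) ^+ 2 <= h (act g (act g x)) * h x.
Proof.
move=> HM f [n [t [m [t0 [t1 [Mm fe]]]]]] g x.
rewrite !fe.
have E1 : \sum_(i < n) t i * m i (act g x) =
  \sum_(i < n) (t i * m i x) * m i (act g x0).
  by apply: eq_bigr => i _; have [_ mm] := HM _ (Mm i); rewrite mm; ring.
have E2 : \sum_(i < n) t i * m i (act g (act g x)) =
  \sum_(i < n) (t i * m i x) * m i (act g x0) ^+ 2.
  apply: eq_bigr => i _; have [_ mm] := HM _ (Mm i).
  by rewrite mm (mm g x); ring.
rewrite E1 E2; apply: cs_ineq => i; rewrite mulr_ge0 //.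
by have [[h0 _] _] := HM _ (Mm i); exact: h0.
Qed.

Lemma cl_props (R : realType) (X : countType) (b : X -> X -> R) c x0 (M : set (X -> R))
  (G : groupType) (act : G -> X -> X) :
  locally_finite b ->
  (forall m, M m -> Sp b c x0 m /\ mult1 act x0 m) ->
  forall u, ptws_closure (conv_hull M) u ->
  Sp b c x0 u /\ (forall g x, u (act g x) ^+ 2 <= u (act g (act g x)) * u x).
Proof.
move=> lf HM u cu; split.
  apply: (@Sp_closed R X b c x0 (conv_hull M) u lf _ cu).
  by apply: conv_Sp => // m /HM [].
move=> g x.
have := @closed_transfer _ R
  (fun h : {ptws X -> R} => h (act g (act g x)) * h x - h (act g x) * h (act g x))
  (conv_hull M) [set r : R | 0 <= r] u (@closed_ge _ 0) cu.
rewrite /= subr_ge0 -expr2; apply.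
  by apply: cvgB; apply: cvgM; exact: ev_cvg.
move=> a ca /=; rewrite subr_ge0 -expr2.
exact: (conv_ineq HM ca).
Qed.

Lemma uniq_mult (R : realType) (X : countType) (b : X -> X -> R) c x0
  (G : groupType) (act : G -> X -> X) (u f : X -> R) :
  (forall x y, 0 <= b x y) -> locally_finite b -> connected_graph b ->
  cocompact act -> Sp b c x0 u -> Sp b c x0 f ->
  (forall g y, u (act g y) = f (act g x0) * u y) -> mult1 act x0 f -> u = f.
Proof.
move=> b0 lf cg [V [fV HV]] Su Sf mu mf.
have upos := pos_Sp b0 lf cg Su; have fpos := pos_Sp b0 lf cg Sf.
have [g0 [v0 [Vv0 _]]] := HV x0.
have v0s : v0 \in fset_set V by rewrite in_fset_set //; apply/mem_set.
have [m ms Hm] := max_seq (fun v => u v / f v) v0s.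
set r := u m / f m.
have Hr : forall y, u y <= r * f y.
  move=> y; have [g [v [Vv ->]]] := HV y.
  have vs : v \in fset_set V by rewrite in_fset_set //; apply/mem_set.
  have := Hm v vs; rewrite -/r ler_pdivrMr // => uv.
  rewrite mu (mf g v) mulrCA; apply: ler_wpM2l => //; exact: ltW.
set w := fun y => r * f y + (-1) * u y.
have w0 : forall y, 0 <= w y by move=> y; rewrite /w mulN1r subr_ge0.
have hw : forall y, Hop b c w y = 0.
  move=> y; rewrite /w Hop_lin //.
  by have [_ [-> _]] := Sf; have [_ [-> _]] := Su; rewrite !mulr0 addr0.
have wm : w m = 0 by rewrite /w /r mulN1r divfK ?subrr // lt0r_neq0.
have wz := zero_all b0 lf cg w0 hw wm.
have r1 : r = 1.
  have := wz x0; rewrite /w mulN1r.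
  have [_ [_ ->]] := Sf; have [_ [_ ->]] := Su.
  by rewrite mulr1 => /eqP; rewrite subr_eq0 => /eqP.
apply: funext => y; have := wz y; rewrite /w r1 mul1r mulN1r => /eqP.
by rewrite subr_eq0 => /eqP ->.
Qed.

Lemma dir1 (R : realType) (X : countType) (b : X -> X -> R) c x0
  (G : groupType) (act : G -> X -> X) (f u v : X -> R) (t : R) :
  (forall x y, 0 <= b x y) -> locally_finite b -> connected_graph b ->
  cocompact act -> Sp b c x0 f -> mult1 act x0 f ->
  Sp b c x0 u -> (forall g x, u (act g x) ^+ 2 <= u (act g (act g x)) * u x) ->
  Sp b c x0 v -> (forall g x, v (act g x) ^+ 2 <= v (act g (act g x)) * v x) ->
  0 < t < 1 -> f = (fun x => t * u x + (1 - t) * v x) -> u = f.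
Proof.
move=> b0 lf cg cc Sf mf Su iu Sv iv t01 fe.
have upos := pos_Sp b0 lf cg Su; have vpos := pos_Sp b0 lf cg Sv.
have fx : forall x, f x = t * u x + (1 - t) * v x by move=> x; rewrite fe.
apply: (uniq_mult b0 lf cg cc Su Sf _ mf) => g y.
apply: (ratio_eq t01 (upos y) (vpos y) (iu g y) (iv g y)).
  by rewrite -!fx (mf g y).
by rewrite -!fx (mf g (act g y)) (mf g y) expr2 mulrA.
Qed.

Lemma conv_phi (R : realType) (X : countType) (b : X -> X -> R) c x0 (M : set (X -> R))
  (G : groupType) (act : G -> X -> X) :
  (forall x y, 0 <= b x y) -> locally_finite b -> connected_graph b ->
  (forall m, M m -> Sp b c x0 m /\ mult1 act x0 m) ->
  forall h g, conv_hull M h -> conv_hull M (fun x => h (act g x) / h (act g x0)).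
Proof.
move=> b0 lf cg HM h g ch.
have Sh : Sp b c x0 h by apply: (conv_Sp lf _ ch) => m /HM [].
have D0 := pos_Sp b0 lf cg Sh (act g x0).
move: ch => [n [t [m [t0 [t1 [Mm fe]]]]]].
exists n, (fun i => t i * m i (act g x0) / h (act g x0)), m.
split; [|split; [|split => //]].
- move=> i; rewrite divr_ge0 ?mulr_ge0 ?(ltW D0) //.
  by have [[h0 _] _] := HM _ (Mm i); exact: h0.
- by rewrite -mulr_suml -fe divff // lt0r_neq0.
- move=> x; rewrite fe mulr_suml; apply: eq_bigr => i _.
  have [_ mm] := HM _ (Mm i); rewrite mm; ring.
Qed.

Lemma conv_Rm (R : realType) (X : countType) (b : X -> X -> R) c x0 (M : set (X -> R))
  (G : groupType) (act : G -> X -> X) (g : G) (B : R) :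
  (forall x y, 0 <= b x y) -> locally_finite b -> connected_graph b ->
  (forall m, M m -> Sp b c x0 m /\ mult1 act x0 m) ->
  (forall h, Sp b c x0 h -> h (act g x0) < B) ->
  forall h, conv_hull M h ->
  conv_hull M (fun x => (h x - h (act g x) / B) / (1 - h (act g x0) / B)).
Proof.
move=> b0 lf cg HM HB h ch.
have Sh : Sp b c x0 h by apply: (conv_Sp lf _ ch) => m /HM [].
have D0 := pos_Sp b0 lf cg Sh (act g x0).
have B0 : 0 < B by apply: lt_trans (HB _ Sh).
have E0 : 0 < 1 - h (act g x0) / B by rewrite subr_gt0 ltr_pdivrMr // mul1r HB.
move: ch => [n [t [m [t0 [t1 [Mm fe]]]]]].
exists n, (fun i => t i * (1 - m i (act g x0) / B) / (1 - h (act g x0) / B)), m.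
split; [|split; [|split => //]].
- move=> i; rewrite divr_ge0 ?mulr_ge0 ?(ltW E0) //.
  have [Si _] := HM _ (Mm i).
  by rewrite subr_ge0 ler_pdivrMr // mul1r ltW // HB.
- rewrite -mulr_suml.
  have -> : \sum_(i < n) t i * (1 - m i (act g x0) / B) =
            \sum_(i < n) (t i - t i * m i (act g x0) / B).
    by apply: eq_bigr => i _; ring.
  by rewrite sumrB -mulr_suml t1 -fe divff // lt0r_neq0.
- move=> x.
  transitivity ((\sum_(i < n) (t i * m i x - t i * m i (act g x) / B)) /
     (1 - h (act g x0) / B)).
    by rewrite sumrB -mulr_suml -!fe.
  rewrite mulr_suml; apply: eq_bigr => i _.
  have [_ mm] := HM _ (Mm i); rewrite mm; ring.
Qed.

Lemma dir2 (R : realType) (X : countType) (b : X -> X -> R) c x0 (M : set (X -> R))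
  (G : groupType) (act : G -> X -> X) :
  (forall x y, 0 <= b x y) -> locally_finite b -> connected_graph b ->
  (forall m, M m -> Sp b c x0 m /\ mult1 act x0 m) ->
  forall p, ptws_closure (conv_hull M) p ->
  (forall u v t, ptws_closure (conv_hull M) u -> ptws_closure (conv_hull M) v ->
     0 < t < 1 -> p = (fun x => t * u x + (1 - t) * v x) -> u = p /\ v = p) ->
  mult1 act x0 p.
Proof.
move=> b0 lf cg HM p cp ext g.
have [Sp_p _] := cl_props lf HM cp.
have ppos := pos_Sp b0 lf cg Sp_p.
have [s [ps ls]] := cg x0 (act g x0).
have [C0 [C00 HC]] := @harnack R X b c b0 lf s x0 ps.
have Hb : forall h, Sp b c x0 h -> h (act g x0) < 2 * (C0 + 1).
  move=> h [h0 [hh h1]]; have := HC h h0 hh; rewrite ls h1 mulr1 => le.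
  apply: (le_lt_trans le); lra.
set B := 2 * (C0 + 1) in Hb.
have B0 : 0 < B by rewrite /B; lra.
set a := p (act g x0).
have a0 : 0 < a := ppos _.
have aB : a < B := Hb _ Sp_p.
set Phi := fun h : {ptws X -> R} => (fun x => h (act g x) / h (act g x0)) : {ptws X -> R}.
set Rm := fun h : {ptws X -> R} =>
  (fun x => (h x - h (act g x) / B) / (1 - h (act g x0) / B)) : {ptws X -> R}.
have cPhi : ptws_closure (conv_hull M) (Phi p).
  apply: (@closure_img _ _ Phi (conv_hull M) (conv_hull M) p cp).
    apply: ptws_cvgP => t; apply: cvgM; first exact: ev_cvg.
    by apply: cvgV; [exact: lt0r_neq0 | exact: ev_cvg].
  by move=> h ch; exact: (conv_phi b0 lf cg HM g ch).
have E0 : 0 < 1 - a / B by rewrite subr_gt0 ltr_pdivrMr // mul1r.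
have cRm : ptws_closure (conv_hull M) (Rm p).
  apply: (@closure_img _ _ Rm (conv_hull M) (conv_hull M) p cp).
    apply: ptws_cvgP => t; apply: cvgM.
      apply: cvgB; first exact: ev_cvg.
      by apply: cvgM; [exact: ev_cvg | exact: cvg_cst].
    apply: cvgV; first exact: lt0r_neq0.
    apply: cvgB; first exact: cvg_cst.
    by apply: cvgM; [exact: ev_cvg | exact: cvg_cst].
  by move=> h ch; exact: (conv_Rm b0 lf cg HM Hb ch).
have l01 : 0 < a / B < 1.
  by rewrite divr_gt0 //= ltr_pdivrMr // mul1r.
have peq : p = (fun x => a / B * Phi p x + (1 - a / B) * Rm p x).
  apply: funext => x; rewrite /Phi /Rm -/a; field.
  by rewrite !lt0r_neq0 // subr_gt0.
have [e _] := ext _ _ _ cPhi cRm l01 peq.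
move=> y; have := congr1 (fun h => h y) e; rewrite /Phi /= -/a => e'.
by rewrite -e' mulrC divfK // lt0r_neq0.
Qed.

Lemma mult_of (R : realType) (G : groupType) (X : Type) (act : G -> X -> X) x0 (f : X -> R) :
  multiplicative_fn act f -> f x0 = 1 -> mult1 act x0 f.
Proof.
move=> [gam [_ Hg]] f1.
have E : forall g y, f (act g y) = gam g * f y.
  move=> g y; have := congr1 (fun h => h y) (Hg g^-1%g).
  by rewrite /Tg /= invgK.
by move=> g y; rewrite !E f1 mulr1.
Qed.

Lemma mult_to (R : realType) (G : groupType) (X : Type) (act : G -> X -> X) x0 (f : X -> R) :
  is_action act -> (forall y, 0 < f y) -> mult1 act x0 f -> multiplicative_fn act f.
Proof.
move=> [_ ia2] fpos mf; exists (fun g => f (act g x0)); split.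
  by split => // g h; rewrite ia2 mf.
by move=> g; apply: funext => x; rewrite /Tg mf.
Qed.

Unset Implicit Arguments. Set Strict Implicit.

Theorem lemma10 (R : realType) (X : countType) (b : X -> X -> R) (c : X -> R)
  (G : groupType) (act : G -> X -> X) (x0 : X) :
  (forall x y, 0 <= b x y) ->
  (forall x, (\esum_(y in [set: X]) (b x y)%:E < +oo)%E) ->
  locally_finite b ->
  connected_graph b ->
  is_action act ->
  cocompact act ->
  G_invariant act b c ->
  let K := ptws_closure [set f | Hplus b c f /\ f x0 = 1] in
  let M := [set f | K f /\ multiplicative_fn act f] in
  M = extreme_points (ptws_closure (conv_hull M)).
Proof.
move=> b0 _ lf cg ia cc _ K M.
have KE : K = Sp b c x0 by rewrite /K K_eq.
have HM : forall m, M m -> Sp b c x0 m /\ mult1 act x0 m.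
  move=> m [Km mm]; rewrite KE in Km; split => //.
  exact: (mult_of mm (proj2 (proj2 Km))).
apply/seteqP; split.
  move=> f Mf; have [Sf mf] := HM f Mf; split.
    rewrite /ptws_closure; apply: subset_closure.
    exists 1%N, (fun _ => 1), (fun _ => f); split => //; split; first by rewrite big_ord1.
    by split => // x; rewrite big_ord1 mul1r.
  move=> u v t cu cv t01 fe.
  have [Su iu] := cl_props lf HM cu; have [Sv iv] := cl_props lf HM cv.
  split; first exact: (dir1 b0 lf cg cc Sf mf Su iu Sv iv t01 fe).
  apply: (dir1 b0 lf cg cc Sf mf Sv iv Su iu (t := 1 - t)).
    by move: t01 => /andP [? ?]; apply/andP; split; lra.
  by rewrite fe; apply: funext => x; ring.
move=> p [cp ext]; have [Sp_p _] := cl_props lf HM cp.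
split; first by rewrite KE.
apply: (mult_to ia (pos_Sp b0 lf cg Sp_p)).
exact: (dir2 b0 lf cg HM cp ext).
Qed.
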